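(* Let $\mathbf{u}=(u_1,u_2)$ be a pair of real binary forms of degree $d$. Then there exist real binary forms $g$ of degree $m$, $h$ of degree $k$, and $u_1',u_2'$ of degree $d-m-k$ such that: $(u_1,u_2)=(u_1'gh,\,u_2'gh)$; $\gcd(u_1,u_2)=gh$; $\gcd(u_1',u_2')=1$; $\gcd(u_1'^2+u_2'^2,\,g)=1$; and every (possibly complex) root of $h$ is a root of $u_1'^2+u_2'^2$. Moreover, this decomposition is unique up to multiplication by constants.
   Context: A real binary form of degree $d$ is a homogeneous polynomial of degree $d$ in two variables $x_1,x_2$ with real coefficients. Every binary form factors over $\mathbb{C}$ into linear factors $\prod_i(\alpha_i x_1-\beta_i x_2)$, uniquely up to scalars; a root of a binary form is a point $(\beta_i:\alpha_i)$ (a nonzero complex zero up to scaling). For binary forms, $a$ divides $b$ if $b=wa$ for some binary form $w$; $\gcd(a,b)$ is a common divisor of highest degree (unique up to scalar), and $a,b$ are coprime if $\gcd(a,b)=1$ (a constant). *)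

(* Defs.v *)
(* binary forms as homogeneous elements of {mpoly R[2]},
   R a real closed field (the reals being the motivating instance),
   complex roots taken in R[i] = complex R. *)
From mathcomp Require Import all_boot all_algebra.
From mathcomp Require Import mpoly complex.
Set Implicit Arguments.
Unset Strict Implicit.
Unset Printing Implicit Defensive.
Import GRing.Theory Num.Theory.
Local Open Scope ring_scope.

Section BinaryForms.
Variable R : rcfType.

Definition is_form (d : nat) (p : {mpoly R[2]}) : Prop :=
  p \is ishomog1 d (@mdeg 2).

Definition fdvd (a b : {mpoly R[2]}) : Prop :=
  exists w : {mpoly R[2]}, w \is homog (@mdeg 2) /\ b = w * a.

(* g is a gcd of a and b: a common divisor of highest degree
   (degree measured by msize = 1 + total degree) *)
Definition is_gcd (a b g : {mpoly R[2]}) : Prop :=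
  [/\ g \is homog (@mdeg 2), fdvd g a, fdvd g b &
      forall c : {mpoly R[2]}, c \is homog (@mdeg 2) ->
        fdvd c a -> fdvd c b -> (msize c <= msize g)%N].

Definition cplx (p : {mpoly R[2]}) : {mpoly R[i][2]} :=
  map_mpoly (real_complex R) p.

Definition is_root (p : {mpoly R[2]}) (v : 'I_2 -> R[i]) : Prop :=
  (exists j, v j != 0) /\ (cplx p).@[v] = 0.

End BinaryForms.

(* Main.v *)
Require Import Defs.
From mathcomp Require Import all_boot all_algebra.
From mathcomp Require Import mpoly complex.
Import GRing.Theory Num.Theory.
Local Open Scope ring_scope.

From mathcomp Require Import ring zify.
Set Implicit Arguments.
Unset Strict Implicit.
Unset Printing Implicit Defensive.
Local Open Scope nat_scope.
Lemma arith d E sD sg sh s1 s2 t1 t2 :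
  sD + 1 = sh + sg -> 0 < sg -> 0 < sh -> s1 <= d.+1 -> s2 <= d.+1 -> E = d.+1 - maxn s1 s2 ->
  (s1 = 0 /\ t1 = 0 \/ 0 < s1 /\ sD <= s1 /\ s1 + 1 = t1 + sD) ->
  (s2 = 0 /\ t2 = 0 \/ 0 < s2 /\ sD <= s2 /\ s2 + 1 = t2 + sD) ->
  (0 < s1 \/ 0 < s2) ->
  [/\ (sg.-1 + E) + sh.-1 <= d, t1 <= (d - (sg.-1 + E) - sh.-1).+1,
    t2 <= (d - (sg.-1 + E) - sh.-1).+1 & maxn t1 t2 = (d - (sg.-1 + E) - sh.-1).+1].
Proof. move=> *; split; lia. Qed.

Local Open Scope ring_scope.

Ltac gen_sizes := repeat match goal with |- context [size ?p] => let s := fresh "s" in move: (size p) => s end.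
Ltac clear_props := repeat match goal with H : ?T |- _ => lazymatch type of T with Prop => clear H end end.
Ltac plia := gen_sizes; clear_props; intros; lia.
Ltac slia := repeat match goal with H : context [size _] |- _ => revert H end; plia.

Section F.
Variable R : rcfType.
Implicit Types (p q w : {mpoly R[2]}) (P Q : {poly R}).
Definition i0 : 'I_2 := ord0.
Definition i1 : 'I_2 := ord_max.
Definition dh (i : 'I_2) : {poly R} := if i == i0 then 'X else 1.
Definition dehom (p : {mpoly R[2]}) : {poly R} := mmap (@polyC R) dh p.
Definition mon (n j : nat) : {mpoly R[2]} := 'X_i0 ^+ j * 'X_i1 ^+ (n - j).
Definition hom (n : nat) (P : {poly R}) : {mpoly R[2]} :=
  \sum_(j < n.+1) P`_j *: mon n j.

Lemma dehomM p q : dehom (p * q) = dehom p * dehom q.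
Proof. exact: rmorphM. Qed.
Lemma dehomD p q : dehom (p + q) = dehom p + dehom q.
Proof. exact: raddfD. Qed.
Lemma dehom0 : dehom 0 = 0.
Proof. exact: raddf0. Qed.
Lemma dehom1 : dehom 1 = 1.
Proof. exact: rmorph1. Qed.
Lemma dehomZ c p : dehom (c *: p) = c *: dehom p.
Proof. by rewrite /dehom mmapZ mul_polyC. Qed.
Lemma dehomXn p k : dehom (p ^+ k) = dehom p ^+ k.
Proof. exact: rmorphXn. Qed.
Lemma dehom_sum (I : Type) (r : seq I) (Pr : pred I) (F : I -> {mpoly R[2]}) :
  dehom (\sum_(i <- r | Pr i) F i) = \sum_(i <- r | Pr i) dehom (F i).
Proof. exact: raddf_sum. Qed.
Lemma dehomX0 : dehom 'X_i0 = 'X.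
Proof. by rewrite /dehom mmapX mmap1U. Qed.
Lemma dehomX1 : dehom 'X_i1 = 1.
Proof. by rewrite /dehom mmapX mmap1U. Qed.

Lemma mon_homog n j : (j <= n)%N -> mon n j \is ishomog1 n (@mdeg 2).
Proof.
move=> le; rewrite /mon.
rewrite -[in X in _ \is X](subnKC le).
have hX (i : 'I_2) k : ('X_i : {mpoly R[2]}) ^+ k \is ishomog1 k (@mdeg 2).
  have h1 : ('X_i : {mpoly R[2]}) \is ishomog1 1 (@mdeg 2) by rewrite dhomogX /= mdeg1.
  by have := dhomogMn k h1; rewrite mul1n.
by apply: dhomogM.
Qed.

Lemma hom_homog n P : hom n P \is ishomog1 n (@mdeg 2).
Proof.
apply: rpred_sum => j _; apply: dhomogZ; apply: mon_homog.
by rewrite -ltnS.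
Qed.

Lemma dehom_mon n j : (j <= n)%N -> dehom (mon n j) = 'X^j.
Proof. by move=> _; rewrite /mon dehomM !dehomXn dehomX0 dehomX1 expr1n mulr1. Qed.

Lemma dehom_hom n P : (size P <= n.+1)%N -> dehom (hom n P) = P.
Proof.
move=> sP; rewrite /hom dehom_sum.
rewrite (eq_bigr (fun j : 'I_n.+1 => P`_j *: 'X^j)); last first.
  by move=> j _; rewrite dehomZ dehom_mon // -ltnS.
rewrite -poly_def; apply/polyP => i; rewrite coef_poly.
by case: ltnP => // h; apply/esym/nth_default; apply: leq_trans h.
Qed.


Lemma hom0 n : hom n 0 = 0.
Proof. by rewrite /hom big1 // => j _; rewrite coef0 scale0r. Qed.
Lemma homD n P Q : hom n (P + Q) = hom n P + hom n Q.
Proof. by rewrite /hom -big_split; apply: eq_bigr => j _; rewrite coefD scalerDl. Qed.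
Lemma homZ n c P : hom n (c *: P) = c *: hom n P.
Proof. by rewrite /hom scaler_sumr; apply: eq_bigr => j _; rewrite coefZ scalerA. Qed.
Lemma hom_sumZ n (I : Type) (r : seq I) (c : I -> R) (F : I -> {poly R}) :
  hom n (\sum_(i <- r) c i *: F i) = \sum_(i <- r) c i *: hom n (F i).
Proof.
elim/big_rec2: _ => [|i y1 y2 _ <-]; first exact: hom0.
by rewrite homD homZ.
Qed.

Lemma hom_Xn n a : (a <= n)%N -> hom n 'X^a = mon n a.
Proof.
move=> le; rewrite /hom (bigD1 (Ordinal (le : a < n.+1)%N)) //= coefXn eqxx scale1r.
by rewrite big1 ?addr0 // => j /eqP nj; rewrite coefXn; case: eqP => // ja;
  [case: nj; apply: val_inj | rewrite scale0r].
Qed.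

Lemma dehom_Xm (m : 'X_{1..2}) : dehom 'X_[m] = 'X^(m i0).
Proof.
by rewrite /dehom mmapX /mmap1 !big_ord_recl big_ord0 /dh /= expr1n !mulr1.
Qed.

Lemma lift00 : lift ord0 (ord0 : 'I_1) = i1.
Proof. exact: val_inj. Qed.

Lemma mdeg2 (m : 'X_{1..2}) : mdeg m = (m i0 + m i1)%N.
Proof. by rewrite mdegE !big_ord_recl big_ord0 addn0 lift00. Qed.

Lemma mon_Xm n (m : 'X_{1..2}) : mdeg m = n -> mon n (m i0) = 'X_[m].
Proof.
move=> dm; rewrite mpolyXE_id !big_ord_recl big_ord0 mulr1 lift00 /mon.
by rewrite -dm mdeg2 addKn.
Qed.

Lemma hom_dehom n p : p \is ishomog1 n (@mdeg 2) -> hom n (dehom p) = p.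
Proof.
move=> hp.
have -> : dehom p = \sum_(m <- msupp p) p@_m *: 'X^(m i0).
  transitivity (dehom (\sum_(m <- msupp p) p@_m *: 'X_[m])); first by rewrite -mpolyE.
  by rewrite dehom_sum; apply: eq_bigr => m _; rewrite dehomZ dehom_Xm.
rewrite hom_sumZ.
transitivity (\sum_(m <- msupp p) p@_m *: 'X_[m]); last exact/esym/mpolyE.
rewrite !big_seq; apply: eq_bigr => m mp.
have dm := dhomog_mf hp mp.
have e2 : mdeg m = n by exact: dm.
by rewrite hom_Xn ?mon_Xm // -e2 mdeg2 leq_addr.
Qed.

Lemma size_dehom n p : p \is ishomog1 n (@mdeg 2) -> (size (dehom p) <= n.+1)%N.
Proof.
move=> hp; rewrite -(hom_dehom hp) /hom dehom_sum.
rewrite (eq_bigr (fun j : 'I_n.+1 => (dehom p)`_j *: 'X^j)); last first.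
  by move=> j _; rewrite dehomZ dehom_mon // -ltnS.
by rewrite -poly_def size_poly.
Qed.

Lemma form_eq n p q : p \is ishomog1 n (@mdeg 2) -> q \is ishomog1 n (@mdeg 2) ->
  dehom p = dehom q -> p = q.
Proof. by move=> hp hq e; rewrite -(hom_dehom hp) -(hom_dehom hq) e. Qed.

Lemma dehom_eq0 n p : p \is ishomog1 n (@mdeg 2) -> (dehom p == 0) = (p == 0).
Proof.
move=> hp; apply/eqP/eqP => [e|->]; last exact: raddf0.
by rewrite -(hom_dehom hp) e hom0.
Qed.

Lemma msize_form n p : p \is ishomog1 n (@mdeg 2) -> p != 0 -> msize p = n.+1.
Proof.
move=> hp nz; have := dhomog_msize hp => h2.
have := dhomog_uniq nz hp h2 => ->.
by rewrite prednK // lt0n msize_poly_eq0.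
Qed.


Local Notation toC := (real_complex R).
Local Notation pC P := (map_poly toC P).

Lemma cplx_eval_hom n P (z : 'I_2 -> R[i]) :
  (cplx (hom n P)).@[z] = \sum_(j < n.+1) toC P`_j * z i0 ^+ j * z i1 ^+ (n - j).
Proof.
rewrite /cplx /hom.
have h1 : forall (F : 'I_n.+1 -> {mpoly R[2]}), map_mpoly toC (\sum_j F j) = \sum_j map_mpoly toC (F j).
  by move=> F; exact: raddf_sum.
have h2 : forall (F : 'I_n.+1 -> {mpoly R[i][2]}), (\sum_j F j).@[z] = \sum_j (F j).@[z].
  by move=> F; exact: raddf_sum.
rewrite h1 h2; apply: eq_bigr => j _ /=.
rewrite map_mpolyZ mevalZ rmorphM rmorphXn rmorphXn mevalM.
have h3 (q : {mpoly R[i][2]}) k : (q ^+ k).@[z] = q.@[z] ^+ k by exact: rmorphXn.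
by rewrite !h3 /= !map_mpolyX !mevalXU mulrA.
Qed.


Lemma eval_form2 n p (z : 'I_2 -> R[i]) : p \is ishomog1 n (@mdeg 2) -> z i1 != 0 ->
  (cplx p).@[z] = z i1 ^+ n * (pC (dehom p)).[z i0 / z i1].
Proof.
move=> hp nz; rewrite -{1}(hom_dehom hp) cplx_eval_hom.
rewrite (horner_coef_wide _ (_ : size (pC (dehom p)) <= n.+1)%N); last first.
  by rewrite size_map_poly; exact: size_dehom hp.
rewrite mulr_sumr; apply: eq_bigr => j _; rewrite coef_map /= expr_div_n.
have -> : z i1 ^+ n = z i1 ^+ j * z i1 ^+ (n - j) by rewrite -exprD subnKC // -ltnS.
have nzj : z i1 ^+ j != 0 by rewrite expf_neq0.
set a := z i1 ^+ j; set b := z i1 ^+ (n - j).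
by field.
Qed.

Lemma eval_form3 n p (z : 'I_2 -> R[i]) : p \is ishomog1 n (@mdeg 2) -> z i1 = 0 ->
  (cplx p).@[z] = toC (dehom p)`_n * z i0 ^+ n.
Proof.
move=> hp z0; rewrite -{1}(hom_dehom hp) cplx_eval_hom big_ord_recr /= subnn expr0 mulr1.
rewrite big1 ?add0r // => j _; rewrite z0 expr0n subn_eq0 leqNgt ltn_ord /= mulr0 //.
Qed.


Definition ef n p := (n.+1 - size (dehom p))%N.

Lemma fdvd0 (a : {mpoly R[2]}) : fdvd a 0.
Proof. by exists 0; split; [apply/homogP; exists 0%N; exact: dhomog0 | rewrite mul0r]. Qed.

Lemma fdvd_dehom (a b : {mpoly R[2]}) : fdvd a b -> dehom a %| dehom b.
Proof. by case=> w [_ ->]; rewrite dehomM dvdp_mull. Qed.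

Lemma fdvd_char n m (a b : {mpoly R[2]}) : a \is ishomog1 n (@mdeg 2) -> b \is ishomog1 m (@mdeg 2) ->
  a != 0 -> b != 0 ->
  fdvd a b <-> (dehom a %| dehom b) /\ (ef n a <= ef m b)%N.
Proof.
move=> ha hb nza nzb.
have nzA : dehom a != 0 by rewrite (dehom_eq0 ha).
have nzB : dehom b != 0 by rewrite (dehom_eq0 hb).
have sA := size_dehom ha; have sB := size_dehom hb.
have sA1 : (0 < size (dehom a))%N by rewrite size_poly_gt0.
rewrite /ef; split.
  case=> w [/homogP [s hw] e]; split; first by rewrite e dehomM dvdp_mull.
  have nzw : w != 0 by apply: contraNneq nzb => w0; rewrite e w0 mul0r.
  have hwa := dhomogM hw ha; rewrite -e in hwa.
  have ems := dhomog_uniq nzb hb hwa.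
  have nzW : dehom w != 0 by rewrite (dehom_eq0 hw).
  have sW := size_dehom hw.
  have := size_mul nzW nzA; rewrite -dehomM -e => ->.
  have sW1 : (0 < size (dehom w))%N by rewrite size_poly_gt0.
  move: sW sA sB sW1 sA1; rewrite ems; move: (size (dehom w)) (size (dehom a)) (size (dehom b)) => x y z; lia.
case=> dv le.
set W := dehom b %/ dehom a.
have eB : dehom b = W * dehom a by rewrite divpK.
have nzW : W != 0 by apply: contraNneq nzB => w0; rewrite eB w0 mul0r.
have sW1 : (0 < size W)%N by rewrite size_poly_gt0.
have sz := size_mul nzW nzA; rewrite -eB in sz.
have nm : (n <= m)%N.
  have := dvdp_leq nzB dv; slia.
have sW : (size W <= (m - n).+1)%N by slia.
exists (hom (m - n) W); split; first by apply/homogP; exists (m - n)%N; exact: hom_homog.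
have h1 := dhomogM (hom_homog (m - n) W) ha; rewrite subnK // in h1.
apply: (form_eq hb h1); by rewrite dehomM dehom_hom.
Qed.


Definition Emin n m (a b : {mpoly R[2]}) :=
  if a == 0 then ef m b else if b == 0 then ef n a else minn (ef n a) (ef m b).

Lemma fdvd_homog_ne0 (c a : {mpoly R[2]}) : fdvd c a -> a != 0 -> c != 0.
Proof. by case=> w [_ ->]; apply: contraNneq => ->; rewrite mulr0. Qed.

Lemma gcd_char n m (a b c : {mpoly R[2]}) :
  a \is ishomog1 n (@mdeg 2) -> b \is ishomog1 m (@mdeg 2) -> (a != 0 \/ b != 0) ->
  is_gcd a b c <->
  exists r, [/\ c \is ishomog1 r (@mdeg 2), c != 0,
     dehom c %= gcdp (dehom a) (dehom b) & ef r c = Emin n m a b].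
Proof.
move=> ha hb nz.
set D := gcdp (dehom a) (dehom b).
have nzD : D != 0.
  rewrite gcdp_eq0 negb_and (dehom_eq0 ha) (dehom_eq0 hb).
  by case: nz => ->; rewrite ?orbT.
have sD : (0 < size D)%N by rewrite size_poly_gt0.
have sA := size_dehom ha; have sB := size_dehom hb.
have cdiv : forall r c', c' \is ishomog1 r (@mdeg 2) -> c' != 0 -> fdvd c' a -> fdvd c' b ->
    dehom c' %| D /\ (ef r c' <= Emin n m a b)%N.
  move=> r c' hc' nzc' da db.
  have dA : dehom c' %| dehom a by exact: fdvd_dehom.
  have dB : dehom c' %| dehom b by exact: fdvd_dehom.
  split; first by rewrite dvdp_gcd dA dB.
  rewrite /Emin; have [a0|a0] := eqVneq a 0.
    have nzb : b != 0 by case: nz => //; rewrite a0 eqxx.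
    by have [] := (fdvd_char hc' hb nzc' nzb).1 db.
  have [_ ea] := (fdvd_char hc' ha nzc' a0).1 da.
  have [//|b0] := eqVneq b 0.
  have [_ eb] := (fdvd_char hc' hb nzc' b0).1 db.
  by rewrite leq_min ea eb.
have isdiv : forall r c', c' \is ishomog1 r (@mdeg 2) -> c' != 0 -> dehom c' %| D ->
    (ef r c' <= Emin n m a b)%N -> fdvd c' a /\ fdvd c' b.
  move=> r c' hc' nzc' dD le.
  have dA : dehom c' %| dehom a by apply: dvdp_trans dD (dvdp_gcdl _ _).
  have dB : dehom c' %| dehom b by apply: dvdp_trans dD (dvdp_gcdr _ _).
  move: le; rewrite /Emin; have [a0|a0] := eqVneq a 0.
    have nzb : b != 0 by case: nz => //; rewrite a0 eqxx.
    by move=> le; split; [rewrite a0; exact: fdvd0|]; apply/(fdvd_char hc' hb nzc' nzb).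
  have [b0|b0] := eqVneq b 0 => le.
    by split; [apply/(fdvd_char hc' ha nzc' a0)|rewrite b0; exact: fdvd0].
  by rewrite leq_min in le; case/andP: le => l1 l2; split;
    [apply/(fdvd_char hc' ha nzc' a0)|apply/(fdvd_char hc' hb nzc' b0)].
have cdiv_size : forall r c', c' \is ishomog1 r (@mdeg 2) -> c' != 0 -> fdvd c' a -> fdvd c' b ->
    (r.+1 <= size D + Emin n m a b)%N.
  move=> r c' hc' nzc' da db; have [dv le] := cdiv r c' hc' nzc' da db.
  have := dvdp_leq nzD dv; have := size_dehom hc'; move: le; rewrite /ef; slia.
split.
  case=> /homogP [r hc] da db mx.
  have nzc : c != 0 by case: nz => nz; [exact: fdvd_homog_ne0 da nz| exact: fdvd_homog_ne0 db nz].
  exists r; have [dv le] := cdiv r c hc nzc da db.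
  pose G := hom (size D - 1 + Emin n m a b) D.
  have hG : G \is ishomog1 (size D - 1 + Emin n m a b) (@mdeg 2) by exact: hom_homog.
  have dG : dehom G = D by rewrite dehom_hom //; slia.
  have nzG : G != 0 by rewrite -(dehom_eq0 hG) dG.
  have [dGa dGb] : fdvd G a /\ fdvd G b.
    by apply: (isdiv _ _ hG nzG); rewrite ?dG // /ef dG; slia.
  have := mx G (homogE hG) dGa dGb; rewrite (msize_form hG nzG) (msize_form hc nzc) => hle.
  have := dvdp_leq nzD dv; have := size_dehom hc; move: le; rewrite /ef => le h1 h2.
  have eqs : size (dehom c) = size D by slia.
  split => //; first by rewrite -dvdp_size_eqp // eqs.
  by rewrite /ef; move: le hle h1 h2 eqs; slia.
case=> r [hc nzc eqc ec].
have dc : dehom c %| D by rewrite (eqp_dvdl _ eqc).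
have [da db] := isdiv r c hc nzc dc (eq_leq ec).
split => //; first exact: homogE hc.
move=> c' /homogP [r' hc'] da' db'.
have [->|nzc'] := eqVneq c' 0; first by rewrite msize0.
rewrite (msize_form hc nzc) (msize_form hc' nzc').
have := cdiv_size r' c' hc' nzc' da' db'.
have := eqp_size eqc; have := size_dehom hc; move: ec; rewrite /ef; slia.
Qed.


Lemma size_sq (P : {poly R}) : size (P ^+ 2) = ((size P).*2).-1.
Proof.
have [->|nz] := eqVneq P 0; first by rewrite expr0n /= size_poly0.
have nz2 : P ^+ 2 != 0 by rewrite expf_neq0.
have := size_exp P 2; rewrite (polySpred nz2) (polySpred nz) /=; lia.
Qed.

Lemma size_sos (P Q : {poly R}) : size (P ^+ 2 + Q ^+ 2) = (maxn (size P) (size Q)).*2.-1.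
Proof.
wlog le : P Q / (size Q <= size P)%N.
  move=> W; case/orP: (leq_total (size Q) (size P)) => h; first exact: (W P Q h).
  by rewrite addrC maxnC; exact: (W Q P h).
rewrite (maxn_idPl le).
have [P0|nzP] := eqVneq P 0.
  by move: le; rewrite P0 size_poly0 leqn0 size_poly_eq0 => /eqP ->; rewrite expr0n addr0 size_poly0.
have sP : (0 < size P)%N by rewrite size_poly_gt0.
case: (ltnP (size Q) (size P)) => h.
  by rewrite size_polyDl // !size_sq; slia.
have eqs : size Q = size P by apply/eqP; rewrite eqn_leq le h.
have nzQ : Q != 0 by rewrite -size_poly_gt0 eqs.
apply/eqP; rewrite eqn_leq; apply/andP; split.
  by have := size_polyD (P ^+ 2) (Q ^+ 2); rewrite !size_sq eqs maxnn.
set k := ((size P).*2).-1.-1.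
have cP : (P ^+ 2)`_k = lead_coef P ^+ 2 by rewrite -lead_coef_exp lead_coefE size_sq.
have cQ : (Q ^+ 2)`_k = lead_coef Q ^+ 2 by rewrite -lead_coef_exp lead_coefE size_sq eqs.
have pos : (P ^+ 2 + Q ^+ 2)`_k != 0.
  rewrite coefD cP cQ; apply/lt0r_neq0/ltr_wpDr; first exact: sqr_ge0.
  by rewrite exprn_even_gt0 //= lead_coef_eq0.
case: leqP => // hh; move: pos; rewrite nth_default ?eqxx //.
by move: hh; rewrite /k -!muln2; move: (size (P ^+ 2 + Q ^+ 2)) (size P) => x y; lia.
Qed.


Lemma cop_noroot (P Q : {poly R}) t : coprimep P Q -> root (pC P) t -> root (pC Q) t -> False.
Proof.
rewrite -(coprimep_map (real_complex R)) coprimep_def => /eqP s1 rP rQ.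
have rg : root (gcdp (pC P) (pC Q)) t by rewrite root_gcd rP rQ.
have nz : gcdp (pC P) (pC Q) != 0 by rewrite -size_poly_gt0 s1.
by have := root_size_gt1 nz rg; rewrite s1.
Qed.

Lemma noroot_cop (P Q : {poly R}) :
  (forall t, root (pC P) t -> root (pC Q) t -> False) -> coprimep P Q.
Proof.
move=> H; rewrite -(coprimep_map (real_complex R)) coprimep_def; apply/negPn/negP => /closed_rootP [t].
by rewrite root_gcd => /andP [] /H.
Qed.

Lemma gdcop_roots (Q D : {poly R}) t : D != 0 ->
  root (pC (D %/ gdcop Q D)) t -> root (pC Q) t.
Proof.
move=> nzD rt; apply/negPn/negP => nrt.
have nzDC : pC D != 0 by rewrite map_poly_eq0.
rewrite map_divp gdcop_map in rt.
set gC := gdcop (pC Q) (pC D) in rt.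
have dg : gC %| pC D by exact: dvdp_gdco.
have eD : pC D = (pC D %/ gC) * gC by rewrite divpK.
have nzg : gC != 0 by apply: contraNneq nzDC => g0; rewrite eD g0 mulr0.
have d1 : ('X - t%:P) * gC %| pC D.
  by rewrite [X in _ %| X]eD dvdp_mul // -root_factor_theorem.
have c1 : coprimep (('X - t%:P) * gC) (pC Q).
  rewrite coprimepMl coprimep_sym coprimep_XsubC nrt /=.
  by rewrite /gC; case: (gdcopP (pC Q) (pC D)) => r _; rewrite (negbTE nzDC) orbF.
have : ('X - t%:P) * gC %| gC.
  by move: d1 c1; rewrite /gC; case: (gdcopP (pC Q) (pC D)) => r _ _ mx; apply: mx.
move/(dvdp_leq nzg); rewrite size_mul ?polyXsubC_eq0 // size_XsubC.
by rewrite add2n /= ltnn.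
Qed.


Lemma Emin_max n (a b : {mpoly R[2]}) : a \is ishomog1 n (@mdeg 2) -> b \is ishomog1 n (@mdeg 2) ->
  (a != 0 \/ b != 0) -> Emin n n a b = (n.+1 - maxn (size (dehom a)) (size (dehom b)))%N.
Proof.
move=> ha hb nz; have sa := size_dehom ha; have sb := size_dehom hb.
rewrite /Emin /ef; have [a0|a0] := eqVneq a 0.
  by rewrite a0 dehom0 size_poly0 max0n.
have [b0|b0] := eqVneq b 0; first by rewrite b0 dehom0 size_poly0 maxn0.
slia.
Qed.

Definition zpt (x y : R[i]) : 'I_2 -> R[i] := fun i => if i == i0 then x else y.
Lemma zpt0 x y : zpt x y i0 = x. Proof. by []. Qed.
Lemma zpt1 x y : zpt x y i1 = y. Proof. by []. Qed.

Lemma nz_pt (z : 'I_2 -> R[i]) : (exists j, z j != 0) -> z i1 = 0 -> z i0 != 0.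
Proof.
case=> j nz z1.
have hj : j = i0 \/ j = i1.
  by case: j {nz} => [[|[|n]] Hj]; [left; exact: val_inj|right; exact: val_inj|].
by case: hj nz => ->; rewrite ?z1 ?eqxx.
Qed.


Lemma existence (d : nat) (u1 u2 : {mpoly R[2]}) :
  is_form d u1 -> is_form d u2 -> (u1 != 0 \/ u2 != 0) ->
  (exists (m k : nat) (g h v1 v2 : {mpoly R[2]}),
     [/\ (m + k <= d)%N /\ is_form m g /\ is_form k h,
         is_form (d - m - k) v1 /\ is_form (d - m - k) v2,
         u1 = v1 * g * h /\ u2 = v2 * g * h,
         is_gcd u1 u2 (g * h) /\ is_gcd v1 v2 1 &
         is_gcd (v1 ^+ 2 + v2 ^+ 2) g 1 /\
         (forall z : 'I_2 -> R[i], is_root h z -> is_root (v1 ^+ 2 + v2 ^+ 2) z)]).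
Proof.
rewrite /is_form => hu1 hu2 nz.
have eE := Emin_max hu1 hu2 nz.
have sU1 := size_dehom hu1; have sU2 := size_dehom hu2.
have nzU : dehom u1 != 0 \/ dehom u2 != 0 by rewrite (dehom_eq0 hu1) (dehom_eq0 hu2).
have [U1 eqU1] : exists U1, dehom u1 = U1 by eexists.
have [U2 eqU2] : exists U2, dehom u2 = U2 by eexists.
rewrite eqU1 eqU2 in eE sU1 sU2 nzU.
have [E eqE] : exists E, Emin d d u1 u2 = E by eexists.
rewrite eqE in eE.
have [D eqD] : exists D, gcdp U1 U2 = D by eexists.
have nzD : D != 0 by rewrite -eqD gcdp_eq0 negb_and; case: nzU => ->; rewrite ?orbT.
have [V1 eqV1] : exists V, U1 %/ D = V by eexists.
have [V2 eqV2] : exists V, U2 %/ D = V by eexists.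
have [Q eqQ] : exists Q, V1 ^+ 2 + V2 ^+ 2 = Q by eexists.
have [gp eqgp] : exists g, gdcop Q D = g by eexists.
have [hp eqhp] : exists h, D %/ gp = h by eexists.
have eU1 : U1 = V1 * D by rewrite -eqV1 divpK // -eqD dvdp_gcdl.
have eU2 : U2 = V2 * D by rewrite -eqV2 divpK // -eqD dvdp_gcdr.
have dgD : gp %| D by rewrite -eqgp dvdp_gdco.
have eD : D = hp * gp by rewrite -eqhp divpK.
have nzg : gp != 0 by apply: contraNneq nzD => g0; rewrite eD g0 mulr0.
have nzh : hp != 0 by apply: contraNneq nzD => h0; rewrite eD h0 mul0r.
have sD : size D = ((size hp + size gp).-1)%N by rewrite eD size_mul.
have sg1 : (0 < size gp)%N by rewrite size_poly_gt0.
have sh1 : (0 < size hp)%N by rewrite size_poly_gt0.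
have sV : forall U V, U = V * D -> (U == 0) = (V == 0) /\ (U != 0 -> size U = (size V + size D).-1).
  move=> U V ->; rewrite mulf_eq0 (negbTE nzD) orbF; split => // nz0.
  by rewrite size_mul //; apply: contraNneq nz0 => ->; rewrite mul0r.
have [sV1a sV1b] := sV _ _ eU1; have [sV2a sV2b] := sV _ _ eU2.
have sDU1 : U1 != 0 -> (size D <= size U1)%N by move=> h; rewrite -eqD; apply: dvdp_leq h (dvdp_gcdl _ _).
have sDU2 : U2 != 0 -> (size D <= size U2)%N by move=> h; rewrite -eqD; apply: dvdp_leq h (dvdp_gcdr _ _).
have [m eqm] : exists m, ((size gp).-1 + E)%N = m by eexists.
have [k eqk] : exists k, (size hp).-1 = k by eexists.
have [n' eqn'] : exists n', (d - m - k)%N = n' by eexists.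
have hsz : [/\ (m + k <= d)%N, (size V1 <= n'.+1)%N, (size V2 <= n'.+1)%N &
             maxn (size V1) (size V2) = n'.+1].
  have fact : forall U V, U = V * D -> 
      (size U = 0%N /\ size V = 0%N \/ (0 < size U)%N /\ (size D <= size U)%N /\ (size U + 1 = size V + size D)%N).
    move=> U V eUV; have [sa sb] := sV _ _ eUV.
    have [U0|nzU0] := eqVneq U 0.
      by left; move: sa; rewrite U0 eqxx => /esym/eqP ->; rewrite size_poly0.
    right; have sDs : (0 < size D)%N by rewrite size_poly_gt0.
    have dvU : D %| U by rewrite eUV dvdp_mull.
    split; first by rewrite size_poly_gt0.
    split; first exact: dvdp_leq nzU0 dvU.
    by move: sDs (sb nzU0); plia.
  rewrite -eqn' -eqm -eqk.
  apply: (arith (sD := size D) (s1 := size U1) (s2 := size U2)) => //.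
  - by move: sD sg1 sh1; plia.
  - exact: fact.
  - exact: fact.
  - by rewrite !size_poly_gt0.
case: hsz => hmk sV1 sV2 smax.
have hg := hom_homog m gp.
have dg : dehom (hom m gp) = gp by rewrite dehom_hom //; move: eqm sg1; plia.
move: (hom m gp) hg dg => g hg dg.
have hh := hom_homog k hp.
have dh : dehom (hom k hp) = hp by rewrite dehom_hom //; move: eqk sh1; plia.
move: (hom k hp) hh dh => h hh dh.
have hv1 := hom_homog n' V1.
have dv1 : dehom (hom n' V1) = V1 by rewrite dehom_hom.
move: (hom n' V1) hv1 dv1 => v1 hv1 dv1.
have hv2 := hom_homog n' V2.
have dv2 : dehom (hom n' V2) = V2 by rewrite dehom_hom.
move: (hom n' V2) hv2 dv2 => v2 hv2 dv2.
have edeg : (n' + m + k)%N = d by move: eqn' hmk; plia.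
have nzg' : g != 0 by rewrite -(dehom_eq0 hg) dg.
have nzh' : h != 0 by rewrite -(dehom_eq0 hh) dh.
have nzv : v1 != 0 \/ v2 != 0.
  rewrite -(dehom_eq0 hv1) -(dehom_eq0 hv2) dv1 dv2 -sV1a -sV2a.
  by case: nzU => ->; [left|right].
have hq : v1 ^+ 2 + v2 ^+ 2 \is ishomog1 (n' * 2) (@mdeg 2).
  by apply: dhomogD; apply: dhomogMn.
have dq : dehom (v1 ^+ 2 + v2 ^+ 2) = Q by rewrite dehomD !dehomXn dv1 dv2.
have sQ : size Q = (n' * 2).+1 by rewrite -eqQ size_sos smax -muln2; plia.
have nzq : v1 ^+ 2 + v2 ^+ 2 != 0 by rewrite -(dehom_eq0 hq) dq -size_poly_gt0 sQ.
exists m, k, g, h, v1, v2; rewrite eqn'; split.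
- by rewrite /is_form.
- by rewrite /is_form.
- split.
  + have hp1 := dhomogM (dhomogM hv1 hg) hh; rewrite edeg in hp1.
    apply: (form_eq hu1 hp1); rewrite !dehomM dv1 dg dh eqU1 eU1 eD.
    by rewrite -mulrA [gp * hp]mulrC.
  + have hp1 := dhomogM (dhomogM hv2 hg) hh; rewrite edeg in hp1.
    apply: (form_eq hu2 hp1); rewrite !dehomM dv2 dg dh eqU2 eU2 eD.
    by rewrite -mulrA [gp * hp]mulrC.
- split.
  + apply: (proj2 (gcd_char _ hu1 hu2 nz)); exists (m + k)%N; split.
    * exact: dhomogM.
    * by rewrite mulf_neq0.
    * by rewrite dehomM dg dh eqU1 eqU2 eqD eD mulrC eqpxx.
    * rewrite /ef dehomM dg dh eqE size_mul //.
      by move: eqm eqk sg1 sh1 eE hmk; plia.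
  + apply: (proj2 (gcd_char _ hv1 hv2 nzv)); exists 0%N; split.
    * exact: dhomog1.
    * exact: oner_neq0.
    * rewrite dehom1 eqp_sym gcdp_eqp1 dv1 dv2 -eqV1 -eqV2 -eqD.
      by apply: coprimep_div_gcd; case: nzU => ->; rewrite ?orbT.
    * rewrite (Emin_max hv1 hv2 nzv) /ef dehom1 size_poly1 dv1 dv2 smax.
      by rewrite subnn.
- split.
  + apply: (proj2 (gcd_char _ hq hg (or_introl nzq))); exists 0%N; split.
    * exact: dhomog1.
    * exact: oner_neq0.
    * rewrite dehom1 eqp_sym gcdp_eqp1 dq dg coprimep_sym -eqgp.
      exact: coprimep_gdco.
    * rewrite /Emin (negbTE nzq) (negbTE nzg') /ef dq sQ dehom1 size_poly1.
      by rewrite subnn min0n.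
  + move=> z [[j nzj] hz].
    have [z1|z1] := eqVneq (z i1) 0.
      exfalso; move: hz; rewrite (eval_form3 hh z1) dh.
      have nz0 : z i0 != 0 by apply: nz_pt z1; exists j.
      apply/eqP; rewrite mulf_neq0 ?expf_neq0 // fmorph_eq0.
      by rewrite -eqk -lead_coefE lead_coef_eq0.
    move: hz; rewrite (eval_form2 hh z1) dh => /eqP.
    rewrite mulf_eq0 expf_eq0 (negbTE z1) andbF /= => rt.
    have rQ : root (pC Q) (z i0 / z i1).
      by apply: (gdcop_roots (D := D)) => //; rewrite eqgp eqhp.
    split; first by exists j.
    by rewrite (eval_form2 hq z1) dq (eqP rQ) mulr0.
Qed.


Lemma decomp_info d m k (u1 u2 g h v1 v2 : {mpoly R[2]}) :
  is_form d u1 -> is_form d u2 -> (u1 != 0 \/ u2 != 0) ->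
  is_form m g -> is_form k h -> is_form (d - m - k) v1 -> is_form (d - m - k) v2 ->
  u1 = v1 * g * h -> u2 = v2 * g * h ->
  is_gcd u1 u2 (g * h) -> is_gcd v1 v2 1 -> is_gcd (v1 ^+ 2 + v2 ^+ 2) g 1 ->
  (forall z : 'I_2 -> R[i], is_root h z -> is_root (v1 ^+ 2 + v2 ^+ 2) z) ->
  (g != 0 /\ h != 0) /\
  [/\ dehom g * dehom h %= gcdp (dehom u1) (dehom u2),
      coprimep (dehom v1 ^+ 2 + dehom v2 ^+ 2) (dehom g),
      (forall t, root (pC (dehom h)) t -> root (pC (dehom v1 ^+ 2 + dehom v2 ^+ 2)) t),
      k = (size (dehom h)).-1 &
      m = ((size (dehom g)).-1 + Emin d d u1 u2)%N].
Proof.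
rewrite /is_form => hu1 hu2 nz hg hh.
move: (d - m - k)%N => n' hv1 hv2 e1 e2 gu gv gq hr.
have nzgh : g != 0 /\ h != 0.
  case: nz; [rewrite e1|rewrite e2]; rewrite !mulf_eq0 !negb_or => /andP [/andP [_ ->] ->] //.
case: nzgh => nzg nzh; split => //.
have nzv : v1 != 0 \/ v2 != 0.
  by case: nz; [rewrite e1|rewrite e2]; rewrite !mulf_eq0 !negb_or => /andP [/andP [-> _] _];
    [left|right].
have [r [hgh nzgh' eqgh efgh]] := (gcd_char _ hu1 hu2 nz).1 gu.
have erk := dhomog_uniq nzgh' hgh (dhomogM hg hh); subst r.
have [r [h1 _ eq1 ef1]] := (gcd_char _ hv1 hv2 nzv).1 gv.
have h0 : (1 : {mpoly R[2]}) \is ishomog1 0 (@mdeg 2) by exact: dhomog1.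
have er := dhomog_uniq (oner_neq0 _) h1 h0; subst r.
move: ef1; rewrite /ef dehom1 size_poly1 subnn (Emin_max hv1 hv2 nzv) => /esym ef1.
have smax : maxn (size (dehom v1)) (size (dehom v2)) = n'.+1.
  by move: ef1 (size_dehom hv1) (size_dehom hv2); plia.
have hq : v1 ^+ 2 + v2 ^+ 2 \is ishomog1 (n' * 2) (@mdeg 2).
  by apply: dhomogD; apply: dhomogMn.
have dq : dehom (v1 ^+ 2 + v2 ^+ 2) = dehom v1 ^+ 2 + dehom v2 ^+ 2 by rewrite dehomD !dehomXn.
have sQ : size (dehom v1 ^+ 2 + dehom v2 ^+ 2) = (n' * 2).+1 by rewrite size_sos smax -muln2; plia.
have nzq : v1 ^+ 2 + v2 ^+ 2 != 0 by rewrite -(dehom_eq0 hq) dq -size_poly_gt0 sQ.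
have [r2 [h2 _ eq2 _]] := (gcd_char _ hq hg (or_introl nzq)).1 gq.
have cop : coprimep (dehom v1 ^+ 2 + dehom v2 ^+ 2) (dehom g).
  by rewrite -gcdp_eqp1 eqp_sym -dq; move: eq2; rewrite dehom1.
have sH := size_dehom hh; have sG := size_dehom hg.
have sG1 : (0 < size (dehom g))%N by rewrite size_poly_gt0 (dehom_eq0 hg).
have sH1 : (0 < size (dehom h))%N by rewrite size_poly_gt0 (dehom_eq0 hh).
have ek : k = (size (dehom h)).-1.
  have : (k < size (dehom h))%N.
    rewrite ltnNge; apply/negP => le.
    have rz : is_root h (zpt 1 0).
      split; first by exists i0; rewrite zpt0 oner_neq0.
      by rewrite (eval_form3 hh (zpt1 1 0)) nth_default // rmorph0 mul0r.
    have [_] := hr _ rz; rewrite (eval_form3 hq (zpt1 1 0)) zpt0 expr1n mulr1 dq.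
    move/eqP; rewrite fmorph_eq0 -[X in _`_X]/((n' * 2).+1.-1) -sQ -lead_coefE lead_coef_eq0.
    by rewrite -size_poly_eq0 sQ.
  by move: sH; plia.
split => //.
- by rewrite -dehomM.
- move=> t rt.
  have rz : is_root h (zpt t 1).
    split; first by exists i1; rewrite zpt1 oner_neq0.
    by rewrite (eval_form2 hh (oner_neq0 _ : zpt t 1 i1 != 0)) zpt0 zpt1 divr1 (eqP rt) mulr0.
  have [_] := hr _ rz; rewrite (eval_form2 hq (oner_neq0 _ : zpt t 1 i1 != 0)) zpt0 zpt1 divr1.
  by rewrite expr1n mul1r dq => /eqP.
- move: efgh; rewrite /ef dehomM size_mul -?(dehom_eq0 hg) -?(dehom_eq0 hh) //.
  by move: ek sG sG1 sH1; plia.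
  by rewrite (dehom_eq0 hg).
by rewrite (dehom_eq0 hh).
Qed.


Lemma gsplit_half (G H G' H' Q : {poly R}) : G * H %= G' * H' -> coprimep Q G' ->
  (forall t, root (pC H) t -> root (pC Q) t) -> G' %| G.
Proof.
move=> e c r.
have d1 : G' %| G * H by rewrite (eqp_dvdr _ e) dvdp_mulIl.
have cGH : coprimep G' H.
  by apply: noroot_cop => t r1 r2; apply: (cop_noroot c (r _ r2) r1).
by rewrite -(Gauss_dvdpl _ cGH).
Qed.

Lemma gsplit_unique (G H G' H' Q : {poly R}) : G * H %= G' * H' -> coprimep Q G -> coprimep Q G' ->
  (forall t, root (pC H) t -> root (pC Q) t) -> (forall t, root (pC H') t -> root (pC Q) t) ->
  G %= G'.
Proof.
move=> e c c' r r'; apply/andP; split; last exact: (gsplit_half e c' r).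
have e' : G' * H' %= G * H by rewrite eqp_sym.
exact: (gsplit_half e' c r').
Qed.

Lemma eqp_scaleE (X Y : {poly R}) : X %= Y -> Y != 0 -> exists2 l, l != 0 & X = l *: Y.
Proof.
case/eqpP => [[c1 c2] /= /andP [n1 n2] e] _.
exists (c2 / c1); first by rewrite mulf_neq0 ?invr_eq0.
by rewrite -[X](scalerK n1) e scalerA mulrC.
Qed.


Lemma uniqueness (d : nat) (u1 u2 : {mpoly R[2]}) :
  is_form d u1 -> is_form d u2 -> (u1 != 0 \/ u2 != 0) ->
  (forall (m k m' k' : nat) (g h v1 v2 g' h' v1' v2' : {mpoly R[2]}),
     is_form m g -> is_form k h -> is_form (d - m - k) v1 -> is_form (d - m - k) v2 ->
     u1 = v1 * g * h -> u2 = v2 * g * h ->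
     is_gcd u1 u2 (g * h) -> is_gcd v1 v2 1 -> is_gcd (v1 ^+ 2 + v2 ^+ 2) g 1 ->
     (forall z : 'I_2 -> R[i], is_root h z -> is_root (v1 ^+ 2 + v2 ^+ 2) z) ->
     is_form m' g' -> is_form k' h' -> is_form (d - m' - k') v1' -> is_form (d - m' - k') v2' ->
     u1 = v1' * g' * h' -> u2 = v2' * g' * h' ->
     is_gcd u1 u2 (g' * h') -> is_gcd v1' v2' 1 -> is_gcd (v1' ^+ 2 + v2' ^+ 2) g' 1 ->
     (forall z : 'I_2 -> R[i], is_root h' z -> is_root (v1' ^+ 2 + v2' ^+ 2) z) ->
     exists a b c : R, [/\ a != 0 /\ b != 0 /\ c != 0,
       g' = a *: g, h' = b *: h & v1' = c *: v1 /\ v2' = c *: v2]).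
Proof.
move=> hu1 hu2 nz m k m' k' g h v1 v2 g' h' v1' v2' hg hh hv1 hv2 e1 e2 gu gv gq hr
  hg' hh' hv1' hv2' e1' e2' gu' gv' gq' hr'.
have [[nzg nzh] [eX cop rts ek em]] := decomp_info hu1 hu2 nz hg hh hv1 hv2 e1 e2 gu gv gq hr.
have [[nzg' nzh'] [eX' cop' rts' ek' em']] :=
  decomp_info hu1 hu2 nz hg' hh' hv1' hv2' e1' e2' gu' gv' gq' hr'.
rewrite /is_form in hg hh hv1 hv2 hg' hh' hv1' hv2'.
have nzG : dehom g != 0 by rewrite (dehom_eq0 hg).
have nzH : dehom h != 0 by rewrite (dehom_eq0 hh).
have nzG' : dehom g' != 0 by rewrite (dehom_eq0 hg').
have nzH' : dehom h' != 0 by rewrite (dehom_eq0 hh').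
have nzX : dehom g * dehom h != 0 by rewrite mulf_neq0.
have [lam nzl eXX] : exists2 l, l != 0 & dehom g' * dehom h' = l *: (dehom g * dehom h).
  by apply: eqp_scaleE => //; apply: eqp_trans eX' _; rewrite eqp_sym.
have eV : forall V V', V * (dehom g * dehom h) = V' * (dehom g' * dehom h') ->
    V' = lam^-1 *: V.
  move=> V V' e; apply: (mulIf nzX); rewrite -scalerAl e eXX -scalerAr scalerA mulVf //.
  by rewrite scale1r.
have eU : forall (u v vp : {mpoly R[2]}), u = v * g * h -> u = vp * g' * h' ->
    dehom vp = lam^-1 *: dehom v.
  by move=> u v vp -> e; apply: eV; rewrite -!dehomM !mulrA e.
have eV1 := eU _ _ _ e1 e1'; have eV2 := eU _ _ _ e2 e2'.
have nzl2 : lam^-1 ^+ 2 != 0 by rewrite expf_neq0 // invr_eq0.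
have eQ : dehom v1' ^+ 2 + dehom v2' ^+ 2 = lam^-1 ^+ 2 *: (dehom v1 ^+ 2 + dehom v2 ^+ 2).
  by rewrite eV1 eV2 !exprZn scalerDr.
rewrite eQ coprimepZl // in cop'.
have rts2 : forall t, root (pC (dehom h')) t -> root (pC (dehom v1 ^+ 2 + dehom v2 ^+ 2)) t.
  move=> t /rts'; rewrite eQ map_polyZ rootZ // fmorph_eq0 //.
have eG : dehom g %= dehom g'.
  apply: (gsplit_unique _ cop cop' rts rts2).
  by rewrite eXX eqp_sym; apply: eqp_scale.
have [a nza eGa] : exists2 a, a != 0 & dehom g' = a *: dehom g.
  by apply: eqp_scaleE => //; rewrite eqp_sym.
have eH : dehom h' = (a^-1 * lam) *: dehom h.
  apply: (mulfI nzG).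
  by rewrite -scalerAr -scalerA -eXX eGa -scalerAl scalerA mulVf // scale1r.
have nzb : a^-1 * lam != 0 by rewrite mulf_neq0 // invr_eq0.
have emm : m' = m by rewrite em em' eGa size_scale.
have ekk : k' = k by rewrite ek ek' eH size_scale.
move: hg' hh' hv1' hv2'; rewrite emm ekk => hg' hh' hv1' hv2'.
exists a, (a^-1 * lam), lam^-1; split.
- by rewrite nza nzb invr_eq0 nzl.
- by apply: (form_eq hg' (dhomogZ a hg)); rewrite dehomZ.
- by apply: (form_eq hh' (dhomogZ _ hh)); rewrite dehomZ.
- by split; [apply: (form_eq hv1' (dhomogZ _ hv1)) | apply: (form_eq hv2' (dhomogZ _ hv2))];
    rewrite dehomZ.
Qed.


End F.

Unset Implicit Arguments.
Set Strict Implicit.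

Theorem proposition3p4 (R : rcfType) (d : nat) (u1 u2 : {mpoly R[2]}) :
  is_form d u1 -> is_form d u2 -> (u1 != 0 \/ u2 != 0) ->
  (exists (m k : nat) (g h v1 v2 : {mpoly R[2]}),
     [/\ (m + k <= d)%N /\ is_form m g /\ is_form k h,
         is_form (d - m - k) v1 /\ is_form (d - m - k) v2,
         u1 = v1 * g * h /\ u2 = v2 * g * h,
         is_gcd u1 u2 (g * h) /\ is_gcd v1 v2 1 &
         is_gcd (v1 ^+ 2 + v2 ^+ 2) g 1 /\
         (forall z : 'I_2 -> R[i], is_root h z -> is_root (v1 ^+ 2 + v2 ^+ 2) z)])
  /\
  (forall (m k m' k' : nat) (g h v1 v2 g' h' v1' v2' : {mpoly R[2]}),
     is_form m g -> is_form k h -> is_form (d - m - k) v1 -> is_form (d - m - k) v2 ->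
     u1 = v1 * g * h -> u2 = v2 * g * h ->
     is_gcd u1 u2 (g * h) -> is_gcd v1 v2 1 -> is_gcd (v1 ^+ 2 + v2 ^+ 2) g 1 ->
     (forall z : 'I_2 -> R[i], is_root h z -> is_root (v1 ^+ 2 + v2 ^+ 2) z) ->
     is_form m' g' -> is_form k' h' -> is_form (d - m' - k') v1' -> is_form (d - m' - k') v2' ->
     u1 = v1' * g' * h' -> u2 = v2' * g' * h' ->
     is_gcd u1 u2 (g' * h') -> is_gcd v1' v2' 1 -> is_gcd (v1' ^+ 2 + v2' ^+ 2) g' 1 ->
     (forall z : 'I_2 -> R[i], is_root h' z -> is_root (v1' ^+ 2 + v2' ^+ 2) z) ->
     exists a b c : R, [/\ a != 0 /\ b != 0 /\ c != 0,
       g' = a *: g, h' = b *: h & v1' = c *: v1 /\ v2' = c *: v2]).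
Proof.
move=> hu1 hu2 nz; split; first exact: existence hu1 hu2 nz.
exact: uniqueness hu1 hu2 nz.
Qed.
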